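(* Let $X=\{x_1,\dots,x_n\}$, $S=K[X]$, and let $x\in X$. Let $I_1\subset S$ be a monomial ideal with linear quotients and let $I_2\subset S$ be a monomial ideal with linear quotients whose minimal generators lie in $K[X\setminus\{x\}]$, such that $I_2\subseteq I_1$. Let $I=xI_1+I_2$ and suppose $\mathcal{G}(xI_1)\subseteq\mathcal{G}(I)$. Then $I$ has linear quotients.
   Context: For a monomial ideal $I$, $\mathcal{G}(I)$ is its minimal monomial generating set. A monomial ideal $I$ has linear quotients if $\mathcal{G}(I)$ can be ordered $u_1,\dots,u_s$ such that for each $i=2,\dots,s$ the colon ideal $(u_1,\dots,u_{i-1}):(u_i)$ is generated by variables. *)

(* Defs.v *)
From mathcomp Require Import all_boot.
Set Implicit Arguments. Unset Strict Implicit. Unset Printing Implicit Defensive.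

Section MonomialIdeals.
Variable n : nat.

Definition mon := {ffun 'I_n -> nat}.

Definition mone : mon := [ffun=> 0].
Definition mmul (u v : mon) : mon := [ffun i => u i + v i].
Definition mvar (i : 'I_n) : mon := [ffun j => nat_of_bool (j == i)].
Definition mdvd (u v : mon) : bool := [forall i, u i <= v i].

(* a set of monomials; a monomial ideal is identified with the set of
   monomials it contains (it is the K-span of them) *)
Definition mset := mon -> Prop.

Definition is_monideal (I : mset) : Prop :=
  forall u v, I u -> mdvd u v -> I v.

Definition msubset (I J : mset) : Prop := forall w, I w -> J w.

Definition gen_by (s : seq mon) : mset :=
  fun w => exists2 u, u \in s & mdvd u w.

(* ideal sum I + J *)
Definition msum (I J : mset) : mset := fun w => I w \/ J w.

Definition mscale (u : mon) (I : mset) : mset :=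
  fun w => exists2 v, I v & w = mmul u v.

Definition colon (I : mset) (u : mon) : mset := fun w => I (mmul w u).

Definition mingens (I : mset) : mset :=
  fun u => I u /\ (forall v, I v -> mdvd v u -> v = u).

Definition generated_by_vars (I : mset) : Prop :=
  exists A : {set 'I_n}, forall w, I w <-> exists2 i, i \in A & 0 < w i.

Definition linear_quotients (I : mset) : Prop :=
  exists s : seq mon,
    [/\ uniq s,
        (forall u, u \in s <-> mingens I u) &
        (forall i, 0 < i < size s ->
           generated_by_vars (colon (gen_by (take i s)) (nth mone s i)))].

End MonomialIdeals.

(* Main.v *)
Require Import Defs.
From mathcomp Require Import all_boot.
From mathcomp Require Import zify.
From Stdlib Require Import Classical.

Section Aux.
Variable n : nat.
Implicit Types (u v w t : mon n).

Lemma mmulE u v i : mmul u v i = u i + v i.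
Proof. by rewrite ffunE. Qed.

Lemma mvarE (k j : 'I_n) : mvar k j = (j == k).
Proof. by rewrite ffunE. Qed.

Lemma mdvdP u v : reflect (forall i, u i <= v i) (mdvd u v).
Proof. exact: forallP. Qed.

Lemma mdvd_refl u : mdvd u u.
Proof. by apply/mdvdP. Qed.

Lemma mdvd_trans u v w : mdvd u v -> mdvd v w -> mdvd u w.
Proof. move=> /mdvdP H1 /mdvdP H2; apply/mdvdP => i; exact: leq_trans (H1 i) (H2 i). Qed.

Lemma dvd_scale x t w u :
  mdvd (mmul x t) (mmul w (mmul x u)) = mdvd t (mmul w u).
Proof.
apply/mdvdP/mdvdP => H i; have := H i; rewrite !mmulE; lia.
Qed.

Lemma dvd_scale2 x t u : mdvd (mmul x t) (mmul x u) = mdvd t u.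
Proof.
apply/mdvdP/mdvdP => H i; have := H i; rewrite !mmulE; lia.
Qed.

Lemma mmul_inj (x : mon n) : injective (mmul x).
Proof.
move=> a b /ffunP H; apply/ffunP => i; have := H i; rewrite !mmulE; exact: addnI.
Qed.

Lemma sum_lt {v w} : mdvd v w -> v <> w -> \sum_i v i < \sum_i w i.
Proof.
move=> /mdvdP Hd Hne.
case: (pickP (fun i => v i < w i)) => [i Hi | H].
  rewrite (bigD1 i) //= [X in _ < X](bigD1 i) //= -addSn.
  apply: leq_add => //; apply: leq_sum => j _; exact: Hd.
exfalso; apply: Hne; apply/ffunP => i.
have := H i; have := Hd i => /=; lia.
Qed.

Lemma mingen_below (I : mset n) (s : seq (mon n)) :
  (forall u, u \in s <-> mingens I u) ->
  forall w, I w -> exists2 t, t \in s & mdvd t w.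
Proof.
move=> Hs.
suff H : forall N w, \sum_i w i = N -> I w -> exists2 t, t \in s & mdvd t w.
  by move=> w; apply: H.
elim/ltn_ind => N IH w Hw Iw.
destruct (classic (forall v, I v -> mdvd v w -> v = w)) as [Hm|Hn].
  exists w; [by apply/Hs; split | exact: mdvd_refl].
apply not_all_ex_not in Hn as [v Hv].
apply imply_to_and in Hv as [Iv Hv].
apply imply_to_and in Hv as [Hvw Hne].
have lt := sum_lt Hvw Hne.
have [t Ht Htv] := IH _ (ltac:(rewrite -Hw; exact lt)) v erefl Iv.
exists t => //; exact: mdvd_trans Htv Hvw.
Qed.

End Aux.
Arguments mmul_inj {n x x1 x2}.
Arguments mingen_below {n I s}.
Arguments sum_lt {n v w}.

Theorem lemma3p2 (n : nat) (k : 'I_n) (I1 I2 : mset n) :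
  is_monideal I1 -> linear_quotients I1 ->
  is_monideal I2 -> linear_quotients I2 ->
  (forall u, mingens I2 u -> u k = 0) ->
  msubset I2 I1 ->
  msubset (mingens (mscale (mvar k) I1))
          (mingens (msum (mscale (mvar k) I1) I2)) ->
  linear_quotients (msum (mscale (mvar k) I1) I2).
Proof.
move=> HI1 [s1 [U1 M1 C1]] HI2 [s2 [U2 M2 C2]] H0 Hsub Hmin.
set x := mvar k.
set f := mmul x.
have fk : forall u, f u k = (u k).+1.
  by move=> u; rewrite /f mmulE /x mvarE eqxx add1n.
have Lsc : forall u, mingens (mscale x I1) (f u) <-> mingens I1 u.
  move=> u; split.
    move=> [[v Iv Hv] Hm]; have Euv := mmul_inj Hv; subst v.
    split => // v' Iv' Hd; apply: (mmul_inj (x := x)).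
    by apply: Hm; [exists v' | rewrite /f dvd_scale2].
  move=> [Iu Hm]; split; first by exists u.
  move=> w [v Iv ->]; rewrite /f dvd_scale2 => Hd.
  by rewrite (Hm v Iv Hd).
have L2 : forall u, mingens I2 u -> mingens (msum (mscale x I1) I2) u.
  move=> u Hu; have uk := H0 u Hu; case: Hu => Iu Hm.
  split; first by right.
  move=> v [[v' Iv' ->]|Iv] Hd; last exact: Hm.
  move/mdvdP: Hd => /(_ k); rewrite -/(f v') fk uk //.
have LI : forall u, mingens (msum (mscale x I1) I2) u ->
    (exists2 v, mingens I1 v & u = f v) \/ mingens I2 u.
  move=> u [[Iu|Iu] Hm].
    left; case: (Iu) => v Iv Ev; exists v => //; apply/Lsc.
    have -> : f v = u by rewrite Ev.
    split => // w Iw; apply: Hm; by left.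
  right; split => // w Iw; apply: Hm; by right.
exists (map f s1 ++ s2); split.
- rewrite cat_uniq (map_inj_uniq (@mmul_inj _ x)) U1 U2 /= andbT.
  apply/hasPn => u /M2 Hu; apply/negP => /mapP [v _ Ev].
  by have := H0 u Hu; rewrite Ev fk.
- move=> u; rewrite mem_cat; split.
    case/orP => [/mapP [v /M1 Hv ->]|/M2 Hu]; last exact: L2.
    by apply: Hmin; apply/Lsc.
  case/LI => [[v /M1 Hv ->]|/M2 Hu]; last by rewrite Hu orbT.
  by rewrite map_f.
- move=> i /andP [i0 iS]; rewrite size_cat size_map in iS.
  rewrite take_cat nth_cat size_map.
  case: ifP => His.
    rewrite -map_take (nth_map (mone n)) //.
    have [A HA] := C1 i (ltac:(by rewrite i0 His)).
    exists A => w; rewrite -HA; split.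
      move=> [t /mapP [t' Ht' ->]]; rewrite /f dvd_scale => Hd.
      by exists t'.
    move=> [t Ht Hd]; exists (f t); first by rewrite map_f.
    by rewrite /f dvd_scale.
  set m := i - size s1.
  have mS : m < size s2 by rewrite /m; move/negbT: His; lia.
  set v := nth (mone n) s2 m.
  have Hv : mingens I2 v by apply/M2; rewrite mem_nth.
  have vk := H0 v Hv.
  have [A2 HA2] : exists A2 : {set 'I_n}, forall w,
      colon (gen_by (take m s2)) v w <-> exists2 j, j \in A2 & 0 < w j.
    case: (posnP m) => [m0|mpos]; last by apply: C2; rewrite mpos.
    exists set0 => w; rewrite m0 take0; split.
      by move=> [t].
    by move=> [j]; rewrite inE.
  exists (k |: A2) => w; split.
    move=> [t]; rewrite mem_cat => /orP [/mapP [t' _ ->]|Ht] Hd.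
      exists k; first by rewrite setU11.
      move/mdvdP: Hd => /(_ k); rewrite fk mmulE vk; lia.
    have [j Hj Hw] := (proj1 (HA2 w)) (ex_intro2 _ _ t Ht Hd).
    by exists j => //; rewrite setU1r.
  move=> [j]; rewrite in_setU1 => /orP [/eqP ->|Hj] Hw.
    have [t Ht Htv] := mingen_below M1 v (Hsub v (proj1 Hv)).
    exists (f t); first by rewrite mem_cat map_f.
    apply/mdvdP => i'; move/mdvdP: Htv => /(_ i').
    rewrite !mmulE /x mvarE; case: eqP => [->|_]; lia.
  have [t Ht Hd] := (proj2 (HA2 w)) (ex_intro2 _ _ j Hj Hw).
  by exists t => //; rewrite mem_cat Ht orbT.
Qed.
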